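(* Let $z\in\mathbb{N}$, $z\ge1$, and let $w\in\{0,1\}^*$ be the standard binary representation of $z$ (no leading zeros). Let $(o_k)_{k\ge0}$ be the sequence of odd terms of the Collatz sequence $z,T(z),T^2(z),\dots$, listed in order of occurrence (so $o_0$ is the first odd term). Then for every $y_0\le0$, in the limit configuration $c_\infty[w]$ the cells of row $y_0$ whose sum bit is defined (i.e. not $\bot$) are exactly the cells $(x,y_0)$ with $x\le x_1$ for some integer $x_1$, only finitely many of these sum bits equal $1$, and, writing $b_x$ for the sum bit of $(x,y_0)$, one has $\sum_{x\le x_1} b_x\,2^{x_1-x}=2^{m}\,o_{|y_0|}$ for some integer $m\ge0$. (That is, row $y_0$ reads, west to east, $0^\infty u\,0^m$ where $u$ is the binary representation of $o_{|y_0|}$.)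
   Context: The Collatz map $T:\mathbb{N}\to\mathbb{N}$ is $T(x)=x/2$ for even $x$ and $T(x)=(3x+1)/2$ for odd $x$. Notation: $E=(1,0)$, $W=(-1,0)$, $N=(0,1)$, $S=(0,-1)$ in $\mathbb{Z}^2$; $[P]\in\{0,1\}$ equals $1$ iff $P$ holds. Strings are indexed from the right: $w=w_{k-1}\cdots w_0$. The CQCA. State set $\Sigma=\{0,1,\bot\}^2\setminus\{(\bot,0),(\bot,1)\}$; a state $(s,c)$ has sum bit $s$ and carry bit $c$. A state is undefined if it is $(\bot,\bot)$, half-defined if $s\in\{0,1\}$ and $c=\bot$, and defined if $s,c\in\{0,1\}$. A configuration is a map $C:\mathbb{Z}^2\to\Sigma$. One step $F(C)$: first the non-local rule produces $C'$: for each $u$, $C'(u)=(0,1)$ if $C(u+W)=(1,\bot)$, $C(u)\in\{(0,\bot),(\bot,\bot)\}$, and $C(u+iE)\in\{(0,\bot),(\bot,\bot)\}$ for all integers $i\ge1$; otherwise $C'(u)=C(u)$. Then the local rule is applied to $C'$ at every cell simultaneously: (i) if $C'(u)=(s,\bot)$ with $s\in\{0,1\}$ and $C'(u+E)=(s',c')$ is defined, then $F(C)(u)=(s,[s+s'+c'\ge2])$; (ii) if $C'(u)=(\bot,\bot)$, $C'(u+N)=(s,\bot)$ is half-defined and $C'(u+N+E)=(s',c')$ is defined, then $F(C)(u)=((s+s'+c')\bmod 2,\bot)$; (iii) otherwise $F(C)(u)=C'(u)$. For $w\in\{0,1\}^*$ the initial configuration $c_0[w]$ is: $c_0[w](-i,0)=(w_{i-1},\bot)$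 for $1\le i\le|w|$, $c_0[w](-i,0)=(0,\bot)$ for $i>|w|$, and $(\bot,\bot)$ elsewhere. Every cell's state in $F^i(c_0[w])$ is eventually constant in $i$; $c_\infty[w]$ denotes the pointwise limit. *)

(* Defs.v *)
From Stdlib Require Import ZArith List Arith Classical ClassicalEpsilon.
Import ListNotations.
Open Scope Z_scope.

Definition collatzT (x : nat) : nat :=
  if Nat.even x then Nat.div2 x else Nat.div2 (3 * x + 1).

Definition kth_odd_term (z k o : nat) : Prop :=
  exists n : nat,
    Nat.iter n collatzT z = o /\ Nat.odd o = true /\
    length (filter (fun j => Nat.odd (Nat.iter j collatzT z)) (seq 0 n)) = k.

(** Standard binary representation (no leading zeros) of a positive
    number, written most-significant bit first, i.e. as the string
    w_{k-1} ... w_0. *)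
Fixpoint binrep (p : positive) : list bool :=
  match p with
  | xH => [true]
  | xO q => binrep q ++ [false]
  | xI q => binrep q ++ [true]
  end.

(** CQCA states: Σ = {0,1,⊥}^2 \ {(⊥,0),(⊥,1)}. *)
Inductive state : Type :=
  | Und                         (* (⊥,⊥) *)
  | Half (s : bool)             (* (s,⊥) *)
  | Def (s c : bool).           (* (s,c) *)

Definition cell := (Z * Z)%type.
Definition config := cell -> state.

Definition addc (u v : cell) : cell := (fst u + fst v, snd u + snd v).
Definition dirE : cell := (1, 0).
Definition dirW : cell := (-1, 0).
Definition dirN : cell := (0, 1).
Definition dirS : cell := (0, -1).
Definition scal (i : Z) (v : cell) : cell := (i * fst v, i * snd v).

Definition b2z (b : bool) : Z := if b then 1 else 0.

Definition zero_or_und (st : state) : Prop := st = Half false \/ st = Und.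

Definition nonlocal_cond (C : config) (u : cell) : Prop :=
  C (addc u dirW) = Half true /\ zero_or_und (C u) /\
  (forall i : Z, 1 <= i -> zero_or_und (C (addc u (scal i dirE)))).

Definition nonlocal_step (C : config) : config :=
  fun u => if excluded_middle_informative (nonlocal_cond C u)
           then Def false true else C u.

Definition local_step (C' : config) : config :=
  fun u =>
    match C' u with
    | Half s =>
        match C' (addc u dirE) with
        | Def s' c' => Def s (2 <=? b2z s + b2z s' + b2z c')
        | _ => C' u
        end
    | Und =>
        match C' (addc u dirN) with
        | Half s =>
            match C' (addc (addc u dirN) dirE) with
            | Def s' c' => Half (Z.odd (b2z s + b2z s' + b2z c'))
            | _ => C' u
            end
        | _ => C' u
        end
    | Def _ _ => C' u
    end.

Definition F (C : config) : config := local_step (nonlocal_step C).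

(** Initial configuration c_0[w]; w = w_{k-1} ... w_0 is given as a list
    read left to right, so w_{i-1} = nth (|w| - i) w. *)
Definition c0 (w : list bool) : config :=
  fun u =>
    let '(x, y) := u in
    if andb (y =? 0) (x <=? -1) then
      let i := Z.to_nat (- x) in
      if (i <=? length w)%nat then Half (nth (length w - i) w false)
      else Half false
    else Und.

Definition is_limit (w : list bool) (L : config) : Prop :=
  forall u : cell, exists N : nat, forall i : nat, (N <= i)%nat ->
    Nat.iter i F (c0 w) u = L u.

Definition sumbit (st : state) : option bool :=
  match st with
  | Und => None
  | Half s => Some s
  | Def s _ => Some s
  end.

Fixpoint rowval (L : config) (y0 x1 : Z) (n : nat) : Z :=
  match n with
  | O => 0
  | S n' => rowval L y0 x1 n' +
      (match sumbit (L (x1 - Z.of_nat n', y0)) with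
       | Some true => 2 ^ Z.of_nat n' | _ => 0 end)
  end.

(* Main.v *)
Require Import Defs.
From Stdlib Require Import ZArith List Arith Lia Bool Classical ClassicalEpsilon FunctionalExtensionality.
Import ListNotations.
Open Scope Z_scope.

Definition cin (A B p : Z) : Z := (A mod 2^p + B mod 2^p + 1) / 2^p.

Lemma div_mod2 (A p : Z) : 0 <= p -> A / 2^p = 2 * (A / 2^p / 2) + Z.b2z (Z.testbit A p).
Proof.
  intros Hp. rewrite Z.testbit_spec' by lia.
  pose proof (Z.div_mod (A / 2^p) 2). lia.
Qed.

Lemma mod_succ (A p : Z) : 0 <= p ->
  A mod 2^(p+1) = A mod 2^p + 2^p * Z.b2z (Z.testbit A p).
Proof.
  intros Hp. rewrite Z.pow_add_r by lia. rewrite Z.rem_mul_r.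
  - rewrite Z.testbit_spec' by lia. reflexivity.
  - pose proof (Z.pow_pos_nonneg 2 p). lia.
  - lia.
Qed.

Lemma cin_range A B p : 0 <= p -> 0 <= cin A B p <= 1.
Proof.
  intros Hp. unfold cin. pose proof (Z.pow_pos_nonneg 2 p ltac:(lia) Hp) as Hq.
  pose proof (Z.mod_pos_bound A (2^p) Hq). pose proof (Z.mod_pos_bound B (2^p) Hq).
  split.
  - apply Z.div_pos; lia.
  - apply Z.lt_succ_r. apply Z.div_lt_upper_bound; lia.
Qed.

Lemma cin_0 A B : cin A B 0 = 1.
Proof. unfold cin. simpl. rewrite !Z.mod_1_r. reflexivity. Qed.

Lemma cin_succ A B p : 0 <= p ->
  cin A B (p+1) = (Z.b2z (Z.testbit A p) + Z.b2z (Z.testbit B p) + cin A B p) / 2.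
Proof.
  intros Hp. unfold cin. pose proof (Z.pow_pos_nonneg 2 p ltac:(lia) Hp) as Hq.
  rewrite !mod_succ by lia.
  replace (2^(p+1)) with (2^p*2) by (rewrite Z.pow_add_r by lia; lia).
  rewrite <- Z.div_div by lia. f_equal.
  replace (A mod 2 ^ p + 2 ^ p * Z.b2z (Z.testbit A p) +
     (B mod 2 ^ p + 2 ^ p * Z.b2z (Z.testbit B p)) + 1)
    with ((A mod 2^p + B mod 2^p + 1) + (Z.b2z (Z.testbit A p) + Z.b2z (Z.testbit B p)) * 2^p) by ring.
  rewrite Z.div_add by lia. ring.
Qed.

Lemma sum_bit A B p : 0 <= p ->
  Z.b2z (Z.testbit (A + B + 1) p) =
  (Z.b2z (Z.testbit A p) + Z.b2z (Z.testbit B p) + cin A B p) mod 2.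
Proof.
  intros Hp. pose proof (Z.pow_pos_nonneg 2 p ltac:(lia) Hp) as Hq.
  rewrite Z.testbit_spec' by lia.
  assert (E: (A + B + 1) / 2^p = A / 2^p + B / 2^p + cin A B p).
  { unfold cin. pose proof (Z.div_mod A (2^p) ltac:(lia)).
    pose proof (Z.div_mod B (2^p) ltac:(lia)).
    replace (A + B + 1) with ((A mod 2^p + B mod 2^p + 1) + (A/2^p + B/2^p) * 2^p) by lia.
    rewrite Z.div_add by lia. ring. }
  rewrite E. rewrite (div_mod2 A p Hp), (div_mod2 B p Hp).
  replace (2 * (A / 2 ^ p / 2) + Z.b2z (Z.testbit A p) +
   (2 * (B / 2 ^ p / 2) + Z.b2z (Z.testbit B p)) + cin A B p)
   with ((Z.b2z (Z.testbit A p) + Z.b2z (Z.testbit B p) + cin A B p) + (A / 2 ^ p / 2 + B / 2 ^ p / 2) * 2) by ring.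
  apply Z.mod_add. lia.
Qed.

Fixpoint v2 (p : positive) : nat := match p with xO q => S (v2 q) | _ => O end.
Fixpoint oddp (p : positive) : positive := match p with xO q => oddp q | _ => p end.

Lemma split_Z p : Zpos p = 2 ^ Z.of_nat (v2 p) * Zpos (oddp p).
Proof.
  induction p; cbn [v2 oddp]; try lia.
  rewrite Pos2Z.inj_xO, IHp, Nat2Z.inj_succ, Z.pow_succ_r by lia. ring.
Qed.

Lemma oddp_odd p : Z.odd (Zpos (oddp p)) = true.
Proof. induction p; simpl; auto. Qed.

Lemma split_nat p : Pos.to_nat p = (2 ^ v2 p * Pos.to_nat (oddp p))%nat.
Proof.
  induction p; cbn [v2 oddp].
  - rewrite Nat.pow_0_r, Nat.mul_1_l. reflexivity.
  - rewrite Pos2Nat.inj_xO, IHp, Nat.pow_succ_r'. lia.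
  - reflexivity.
Qed.

Lemma oddp_odd_nat p : Nat.odd (Pos.to_nat (oddp p)) = true.
Proof. induction p; simpl; auto. rewrite Pos2Nat.inj_xI.
  rewrite Nat.odd_succ. rewrite Nat.even_mul. reflexivity. Qed.

Fixpoint Nk (p0 : positive) (k : nat) : positive :=
  match k with
  | O => p0
  | S k' => Pos.succ (3 * oddp (Nk p0 k'))
  end.

Definition oz p0 k := Zpos (oddp (Nk p0 k)).
Definition jz p0 k := Z.of_nat (v2 (Nk p0 k)).

Lemma jz_nonneg p0 k : 0 <= jz p0 k.
Proof. unfold jz; lia. Qed.

Lemma oz_pos p0 k : 0 < oz p0 k.
Proof. unfold oz; lia. Qed.

Lemma oz_odd p0 k : Z.odd (oz p0 k) = true.
Proof. apply oddp_odd. Qed.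

Lemma N_succ p0 k : 3 * oz p0 k + 1 = 2 ^ jz p0 (S k) * oz p0 (S k).
Proof.
  unfold oz, jz. rewrite <- split_Z. simpl Nk. lia.
Qed.

Lemma jz_S p0 k : 1 <= jz p0 (S k).
Proof.
  unfold jz. simpl Nk.
  destruct (oddp (Nk p0 k)) eqn:E; simpl; try lia.
  pose proof (oddp_odd (Nk p0 k)). rewrite E in H. discriminate.
Qed.

Fixpoint ff (p0 : positive) (k : nat) : Z :=
  match k with O => - jz p0 O | S r => ff p0 r - jz p0 (S r) end.
Fixpoint Ft (p0 : positive) (k : nat) : Z :=
  match k with O => 1 | S r => Ft p0 r + jz p0 (S r) + 1 end.
Definition aa p0 k := ff p0 k + jz p0 k - 1.
Definition BB p0 k x := match k with O => 0 | S r => Ft p0 r + ff p0 r - 1 - x end.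
Definition sb p0 k x := Z.testbit (oz p0 k) (ff p0 k - 1 - x).
Definition cb p0 k x := cin (oz p0 k) (2 * oz p0 k) (ff p0 k - x) =? 1.

Definition DP p0 t k x := x <= ff p0 k /\ Ft p0 k + ff p0 k - 1 - x <= t /\ Ft p0 k <= t.
Definition DP' p0 t k x := DP p0 t k x \/ (x = ff p0 k /\ Ft p0 k <= t + 1).
Definition HP p0 t k x := x <= aa p0 k /\ BB p0 k x <= t.

Lemma Ft_pos p0 k : 1 <= Ft p0 k.
Proof. induction k as [|k IH]; simpl; [lia| pose proof (jz_nonneg p0 (S k)); lia]. Qed.

Ltac tim p0 k :=
  unfold DP', DP, HP, aa, BB in *;
  pose proof (jz_nonneg p0 k); pose proof (Ft_pos p0 k);
  destruct k as [|?r]; cbn [ff Ft] in *;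
  [ lia | pose proof (jz_S p0 r); pose proof (jz_nonneg p0 r); pose proof (Ft_pos p0 r); lia ].

Lemma T1 p0 t k x : DP' p0 t k x -> DP p0 (t+1) k x.
Proof. tim p0 k. Qed.
Lemma T2 p0 t k x : DP' p0 t k (x+1) -> DP p0 (t+1) k x.
Proof. tim p0 k. Qed.
Lemma T3 p0 t k x : ~ DP' p0 t k x -> ~ DP' p0 t k (x+1) -> ~ DP p0 (t+1) k x.
Proof. tim p0 k. Qed.
Lemma T4 p0 t k x : 0 <= t -> DP p0 (t+1) k x -> DP' p0 t k x \/ HP p0 t k x.
Proof. tim p0 k. Qed.
Lemma T5 p0 t r x : DP' p0 t r (x+1) -> HP p0 (t+1) (S r) x.
Proof. tim p0 r. Qed.
Lemma T6 p0 t r x : 0 <= t -> HP p0 (t+1) (S r) x -> ~ HP p0 t (S r) x ->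
  ~ DP' p0 t r x /\ HP p0 t r x /\ DP' p0 t r (x+1).
Proof. tim p0 r. Qed.
Lemma T7 p0 t x : 0 <= t -> ~ HP p0 t 0 x -> ~ HP p0 (t+1) 0 x.
Proof. tim p0 O. Qed.
Lemma HP_mono p0 t k x : HP p0 t k x -> HP p0 (t+1) k x.
Proof. tim p0 k. Qed.
Lemma DP_mono p0 t k x : DP p0 t k x -> DP p0 (t+1) k x.
Proof. tim p0 k. Qed.
Lemma N1 p0 t k x y : HP p0 t k x -> x <= y -> y <= ff p0 k - 1 -> HP p0 t k y.
Proof. tim p0 k. Qed.
Lemma N2 p0 t k : 0 <= t -> HP p0 t k (ff p0 k - 1) -> Ft p0 k <= t + 1.
Proof. tim p0 k. Qed.
Lemma N3 p0 t k : 0 <= t -> Ft p0 k = t + 1 -> HP p0 t k (ff p0 k - 1) /\ ~ DP p0 t k (ff p0 k - 1).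
Proof. tim p0 k. Qed.
Lemma N5 p0 t k : Ft p0 k <= t -> DP p0 t k (ff p0 k).
Proof. tim p0 k. Qed.
Lemma DP'_DP p0 t k x : DP' p0 t k x -> ~ DP p0 t k x -> x = ff p0 k /\ Ft p0 k = t + 1.
Proof. tim p0 k. Qed.
Lemma aa_ge p0 k : ff p0 k - 1 <= aa p0 k.
Proof. unfold aa. pose proof (jz_nonneg p0 k). lia. Qed.

Lemma sb_high p0 k x : ff p0 k <= x -> sb p0 k x = false.
Proof. intros. unfold sb. apply Z.testbit_neg_r. lia. Qed.

Lemma sb_low1 p0 k : sb p0 k (ff p0 k - 1) = true.
Proof. unfold sb. replace (ff p0 k - 1 - (ff p0 k - 1)) with 0 by lia.
  rewrite Z.bit0_odd. apply oz_odd. Qed.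

Lemma cb_fire p0 k : cb p0 k (ff p0 k) = true.
Proof. unfold cb. replace (ff p0 k - ff p0 k) with 0 by lia. rewrite cin_0. reflexivity. Qed.

Lemma sb_true_bound p0 k x : sb p0 k x = true -> ff p0 k - 1 - Z.log2 (oz p0 k) <= x.
Proof.
  unfold sb. intros H. destruct (Z_le_gt_dec (ff p0 k - 1 - Z.log2 (oz p0 k)) x); auto.
  rewrite Z.bits_above_log2 in H. discriminate. pose proof (oz_pos p0 k); lia. lia.
Qed.

Lemma testbit_double a p : 0 <= p -> Z.testbit (2 * a) p = Z.testbit a (p - 1).
Proof. intros. replace (2 * a) with (Z.shiftl a 1).
  apply Z.shiftl_spec; lia. rewrite Z.shiftl_mul_pow2 by lia. lia. Qed.

Lemma testbit_mulpow a j p : 0 <= j -> 0 <= p -> Z.testbit (2^j * a) p = Z.testbit a (p - j).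
Proof. intros. replace (2^j * a) with (Z.shiftl a j).
  apply Z.shiftl_spec; lia. rewrite Z.shiftl_mul_pow2 by lia. lia. Qed.

Lemma b2z_odd n : Z.b2z (Z.odd n) = n mod 2.
Proof. rewrite <- Z.bit0_odd. apply Z.bit0_mod. Qed.

Lemma b2z_cin A B p : 0 <= p -> Z.b2z (cin A B p =? 1) = cin A B p.
Proof. intros. pose proof (cin_range A B p H).
  destruct (Z.eqb_spec (cin A B p) 1); simpl; lia. Qed.

Lemma SUM p0 r x : x + 1 <= ff p0 r ->
  sb p0 (S r) x = Z.odd (Z.b2z (sb p0 r x) + Z.b2z (sb p0 r (x+1)) + Z.b2z (cb p0 r (x+1))).
Proof.
  intros Hx. set (p := ff p0 r - 1 - x).
  assert (Hp : 0 <= p) by (unfold p; lia).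
  apply Z.b2z_inj. rewrite b2z_odd.
  unfold sb, cb. cbn [ff].
  replace (ff p0 r - jz p0 (S r) - 1 - x) with (p - jz p0 (S r)) by (unfold p; lia).
  rewrite <- testbit_mulpow by (auto using jz_nonneg).
  rewrite <- N_succ.
  replace (3 * oz p0 r + 1) with (oz p0 r + 2 * oz p0 r + 1) by ring.
  rewrite sum_bit by auto.
  replace (ff p0 r - 1 - x) with p by reflexivity.
  replace (ff p0 r - 1 - (x + 1)) with (p - 1) by (unfold p; lia).
  replace (ff p0 r - (x + 1)) with p by (unfold p; lia).
  rewrite testbit_double by auto.
  rewrite b2z_cin by auto. reflexivity.
Qed.

Lemma CARRY p0 r x : x + 1 <= ff p0 r ->
  cb p0 r x = (2 <=? Z.b2z (sb p0 r x) + Z.b2z (sb p0 r (x+1)) + Z.b2z (cb p0 r (x+1))).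
Proof.
  intros Hx. set (p := ff p0 r - 1 - x).
  assert (Hp : 0 <= p) by (unfold p; lia).
  unfold sb, cb.
  replace (ff p0 r - x) with (p + 1) by (unfold p; lia).
  rewrite cin_succ by auto.
  replace (ff p0 r - 1 - x) with p by reflexivity.
  replace (ff p0 r - 1 - (x + 1)) with (p - 1) by (unfold p; lia).
  replace (ff p0 r - (x + 1)) with p by (unfold p; lia).
  rewrite testbit_double by auto.
  rewrite b2z_cin by auto.
  pose proof (cin_range (oz p0 r) (2 * oz p0 r) p Hp).
  destruct (Z.testbit (oz p0 r) p), (Z.testbit (oz p0 r) (p - 1));
  assert (cin (oz p0 r) (2 * oz p0 r) p = 0 \/ cin (oz p0 r) (2 * oz p0 r) p = 1) as [E|E] by lia;
  rewrite E; reflexivity.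
Qed.

Lemma DPd p0 t k x : {DP p0 t k x} + {~ DP p0 t k x}.
Proof. unfold DP.
  destruct (Z_le_dec x (ff p0 k)), (Z_le_dec (Ft p0 k + ff p0 k - 1 - x) t), (Z_le_dec (Ft p0 k) t);
  try (left; auto; fail); right; lia. Qed.
Lemma DP'd p0 t k x : {DP' p0 t k x} + {~ DP' p0 t k x}.
Proof. unfold DP'. destruct (DPd p0 t k x). left; auto.
  destruct (Z.eq_dec x (ff p0 k)), (Z_le_dec (Ft p0 k) (t+1)); try (left; right; auto; fail); right; intros [?|?]; auto; lia. Qed.
Lemma HPd p0 t k x : {HP p0 t k x} + {~ HP p0 t k x}.
Proof. unfold HP. destruct (Z_le_dec x (aa p0 k)), (Z_le_dec (BB p0 k x) t);
  try (left; auto; fail); right; lia. Qed.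

Definition rowC p0 t k x : state :=
  if DPd p0 t k x then Def (sb p0 k x) (cb p0 k x)
  else if HPd p0 t k x then Half (sb p0 k x) else Und.
Definition rowC' p0 t k x : state :=
  if DP'd p0 t k x then Def (sb p0 k x) (cb p0 k x)
  else if HPd p0 t k x then Half (sb p0 k x) else Und.

Definition Cl p0 (t : Z) (u : cell) : state :=
  let '(x, y) := u in if Z_lt_dec 0 y then Und else rowC p0 t (Z.to_nat (- y)) x.
Definition Cl' p0 (t : Z) (u : cell) : state :=
  let '(x, y) := u in if Z_lt_dec 0 y then Und else rowC' p0 t (Z.to_nat (- y)) x.

Lemma DP'_le p0 t k x : DP' p0 t k x -> x <= ff p0 k.
Proof. unfold DP', DP; lia. Qed.

Lemma ZOU p0 t k x : ff p0 k <= x -> ~ DP p0 t k x -> zero_or_und (rowC p0 t k x).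
Proof. intros H1 H2. unfold rowC, zero_or_und. destruct (DPd p0 t k x); [contradiction|].
  destruct (HPd p0 t k x); [left; rewrite sb_high by auto; auto | right; auto]. Qed.

Lemma notZOU p0 t k : HP p0 t k (ff p0 k - 1) -> ~ zero_or_und (rowC p0 t k (ff p0 k - 1)).
Proof. intros H. unfold rowC, zero_or_und. rewrite sb_low1.
  destruct (DPd p0 t k (ff p0 k - 1)); [|destruct (HPd p0 t k (ff p0 k - 1)); [|contradiction]];
  intros [E|E]; discriminate. Qed.

Lemma addc_E (x y i : Z) : addc (x, y) (scal i dirE) = (x + i, y).
Proof. unfold addc, scal, dirE; simpl. f_equal; ring. Qed.

Lemma NL p0 t : 0 <= t -> forall v, nonlocal_step (Cl p0 t) v = Cl' p0 t v.
Proof.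
  intros Ht [x y]. unfold nonlocal_step.
  destruct (excluded_middle_informative (nonlocal_cond (Cl p0 t) (x, y))) as [Hc|Hc].
  - destruct Hc as [HW [Hu He]].
    unfold addc, dirW in HW; simpl in HW. replace (y + 0) with y in HW by ring.
    unfold Cl in HW, Hu, He |- *. destruct (Z_lt_dec 0 y); [discriminate|].
    set (k := Z.to_nat (- y)) in *.
    unfold rowC in HW. destruct (DPd p0 t k (x + -1)) as [|HD]; [discriminate|].
    destruct (HPd p0 t k (x + -1)) as [HH|]; [|discriminate].
    injection HW as Hs.
    assert (Hx : x <= ff p0 k).
    { destruct (Z_le_gt_dec x (ff p0 k)); auto. rewrite sb_high in Hs by lia. discriminate. }
    assert (Hx2 : x = ff p0 k).
    { destruct (Z.eq_dec x (ff p0 k)); auto. exfalso.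
      assert (HH2 : HP p0 t k (ff p0 k - 1)) by (apply (N1 p0 t k (x + -1)); auto; lia).
      destruct (Z.eq_dec x (ff p0 k - 1)) as [E|E].
      - apply (notZOU p0 t k HH2). rewrite <- E. exact Hu.
      - specialize (He (ff p0 k - 1 - x) ltac:(lia)).
        rewrite addc_E in He. destruct (Z_lt_dec 0 y); [lia|].
        replace (x + (ff p0 k - 1 - x)) with (ff p0 k - 1) in He by ring.
        exact (notZOU p0 t k HH2 He). }
    subst x. replace (ff p0 k + -1) with (ff p0 k - 1) in HH by ring.
    pose proof (N2 p0 t k Ht HH).
    unfold Cl'. destruct (Z_lt_dec 0 y); [lia|]. fold k.
    unfold rowC'. destruct (DP'd p0 t k (ff p0 k)) as [|HD']; [|exfalso; apply HD'; right; auto].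
    rewrite sb_high, cb_fire by lia. reflexivity.
  - unfold Cl, Cl'. destruct (Z_lt_dec 0 y); auto.
    set (k := Z.to_nat (- y)) in *.
    unfold rowC, rowC'.
    destruct (DP'd p0 t k x) as [D1|D1], (DPd p0 t k x) as [D2|D2]; auto.
    + exfalso. destruct (DP'_DP p0 t k x D1 D2) as [-> HF].
      apply Hc. destruct (N3 p0 t k Ht HF) as [HH HND].
      split; [|split].
      * unfold addc, dirW; simpl. replace (y + 0) with y by ring.
        replace (ff p0 k + -1) with (ff p0 k - 1) by ring.
        unfold Cl. destruct (Z_lt_dec 0 y); [lia|]. fold k. unfold rowC.
        destruct (DPd p0 t k (ff p0 k - 1)); [contradiction|].
        destruct (HPd p0 t k (ff p0 k - 1)); [|contradiction].
        rewrite sb_low1. reflexivity.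
      * unfold Cl. destruct (Z_lt_dec 0 y); [lia|]. fold k. apply ZOU; auto; lia.
      * intros i Hi. rewrite addc_E. unfold Cl. destruct (Z_lt_dec 0 y); [lia|]. fold k.
        apply ZOU. lia. unfold DP; lia.
    + exfalso. apply D1. left. auto.
Qed.

Lemma step_row p0 t k x : 0 <= t ->
  match rowC' p0 t k x with
  | Half s =>
      match rowC' p0 t k (x + 1) with
      | Def s' c' => Def s (2 <=? Z.b2z s + Z.b2z s' + Z.b2z c')
      | _ => rowC' p0 t k x
      end
  | Und =>
      match (match k with O => Und | S r => rowC' p0 t r x end) with
      | Half s =>
          match (match k with O => Und | S r => rowC' p0 t r (x + 1) end) with
          | Def s' c' => Half (Z.odd (Z.b2z s + Z.b2z s' + Z.b2z c'))
          | _ => rowC' p0 t k x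
          end
      | _ => rowC' p0 t k x
      end
  | Def _ _ => rowC' p0 t k x
  end = rowC p0 (t + 1) k x.
Proof.
  intros Ht. unfold rowC' at 1.
  destruct (DP'd p0 t k x) as [D1|D1].
  - unfold rowC', rowC. destruct (DP'd p0 t k x); [|contradiction].
    destruct (DPd p0 (t+1) k x); auto. exfalso; eauto using T1.
  - destruct (HPd p0 t k x) as [H1|H1].
    + unfold rowC' at 1. destruct (DP'd p0 t k (x+1)) as [D2|D2].
      * unfold rowC. destruct (DPd p0 (t+1) k x) as [|ND]; [|exfalso; eauto using T2].
        rewrite (CARRY p0 k x) by (apply DP'_le in D2; lia). reflexivity.
      * unfold rowC', rowC. destruct (DP'd p0 t k x); [contradiction|].
        destruct (HPd p0 t k x); [|contradiction].
        destruct (DPd p0 (t+1) k x) as [D3|]; [exfalso; eapply T3; eauto|].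
        destruct (HPd p0 (t+1) k x) as [|H3]; [|exfalso; eauto using HP_mono].
        destruct (HPd p0 t k (x+1)); reflexivity.
    + assert (ND : ~ DP p0 (t+1) k x) by (intro D; destruct (T4 p0 t k x Ht D); auto).
      unfold rowC at 1. destruct (DPd p0 (t+1) k x); [contradiction|].
      destruct k as [|r].
      * destruct (HPd p0 (t+1) 0 x); [exfalso; eapply T7; eauto|].
        unfold rowC'. destruct (DP'd p0 t 0 x); [contradiction|].
        destruct (HPd p0 t 0 x); [contradiction|]. reflexivity.
      * assert (Und = rowC' p0 t (S r) x) as E.
        { unfold rowC'. destruct (DP'd p0 t (S r) x); [contradiction|].
          destruct (HPd p0 t (S r) x); [contradiction|]. reflexivity. }
        rewrite <- E.
        unfold rowC' at 1. destruct (DP'd p0 t r x) as [D3|D3].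
        { destruct (HPd p0 (t+1) (S r) x) as [H4|]; auto.
          exfalso. destruct (T6 p0 t r x Ht H4 H1) as [? _]. auto. }
        destruct (HPd p0 t r x) as [H3|H3].
        2:{ destruct (HPd p0 (t+1) (S r) x) as [H4|]; auto.
          exfalso. destruct (T6 p0 t r x Ht H4 H1) as [_ [? _]]. auto. }
        unfold rowC' at 1. destruct (DP'd p0 t r (x+1)) as [D4|D4].
        { destruct (HPd p0 (t+1) (S r) x) as [|H4]; [|exfalso; eauto using T5].
          rewrite (SUM p0 r x) by (apply DP'_le in D4; lia). reflexivity. }
        destruct (HPd p0 (t+1) (S r) x) as [H4|].
        { exfalso. destruct (T6 p0 t r x Ht H4 H1) as [_ [_ ?]]. auto. }
        destruct (HPd p0 t r (x+1)); reflexivity.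
Qed.

Lemma Cl_step p0 t : 0 <= t -> F (Cl p0 t) = Cl p0 (t + 1).
Proof.
  intros Ht. apply functional_extensionality. intros [x y].
  unfold F. replace (nonlocal_step (Cl p0 t)) with (Cl' p0 t)
    by (apply functional_extensionality; intros; symmetry; apply NL; auto).
  unfold local_step, addc, dirE, dirN; simpl. rewrite !Z.add_0_r.
  unfold Cl', Cl. destruct (Z_lt_dec 0 y) as [Hy|Hy].
  - destruct (Z_lt_dec 0 (y+1)); [reflexivity| lia].
  - rewrite <- (step_row p0 t (Z.to_nat (- y)) x Ht).
    destruct (Z_lt_dec 0 (y+1)) as [Hy1|Hy1].
    + assert (y = 0) by lia. subst y. simpl. reflexivity.
    + destruct (Z.to_nat (- y)) as [|r] eqn:Ek.
      * lia.
      * replace (Z.to_nat (- (y + 1))) with r by lia. reflexivity.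
Qed.

Lemma binrep_bit p : forall i : nat, (1 <= i)%nat ->
  (if (i <=? length (binrep p))%nat then nth (length (binrep p) - i) (binrep p) false else false)
  = Z.testbit (Zpos p) (Z.of_nat i - 1).
Proof.
  induction p as [q IH|q IH|]; intros i Hi.
  - cbn [binrep]. rewrite length_app. simpl length.
    rewrite Pos2Z.inj_xI.
    destruct (Nat.eq_dec i 1) as [->|Hi1].
    + rewrite (proj2 (Nat.leb_le _ _)) by lia.
      rewrite app_nth2 by lia. replace (length (binrep q) + 1 - 1 - length (binrep q))%nat with O by lia.
      reflexivity.
    + replace (Z.of_nat i - 1) with (Z.succ (Z.of_nat (i - 1) - 1)) by lia.
      replace (2 * Z.pos q + 1) with (2 * Z.pos q + Z.b2z true) by reflexivity.
      rewrite Z.testbit_succ_r by lia.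
      rewrite <- (IH (i - 1)%nat) by lia.
      replace (i <=? length (binrep q) + 1)%nat with (i - 1 <=? length (binrep q))%nat.
      2:{ destruct (Nat.leb_spec (i-1) (length (binrep q))), (Nat.leb_spec i (length (binrep q) + 1)); lia. }
      destruct (Nat.leb_spec (i-1) (length (binrep q))); auto.
      rewrite app_nth1 by lia. f_equal. lia.
  - cbn [binrep]. rewrite length_app. simpl length.
    rewrite Pos2Z.inj_xO.
    destruct (Nat.eq_dec i 1) as [->|Hi1].
    + rewrite (proj2 (Nat.leb_le _ _)) by lia.
      rewrite app_nth2 by lia. replace (length (binrep q) + 1 - 1 - length (binrep q))%nat with O by lia.
      reflexivity.
    + replace (Z.of_nat i - 1) with (Z.succ (Z.of_nat (i - 1) - 1)) by lia.
      replace (2 * Z.pos q) with (2 * Z.pos q + Z.b2z false) by (cbn [Z.b2z]; ring).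
      rewrite Z.testbit_succ_r by lia.
      rewrite <- (IH (i - 1)%nat) by lia.
      replace (i <=? length (binrep q) + 1)%nat with (i - 1 <=? length (binrep q))%nat.
      2:{ destruct (Nat.leb_spec (i-1) (length (binrep q))), (Nat.leb_spec i (length (binrep q) + 1)); lia. }
      destruct (Nat.leb_spec (i-1) (length (binrep q))); auto.
      rewrite app_nth1 by lia. f_equal. lia.
  - simpl length. destruct (Nat.eq_dec i 1) as [->|Hi1].
    + reflexivity.
    + rewrite (proj2 (Nat.leb_gt _ _)) by lia.
      symmetry. apply Z.bits_above_log2; simpl; lia.
Qed.

Lemma Cl_init p0 : Cl p0 0 = c0 (binrep p0).
Proof.
  apply functional_extensionality. intros [x y]. unfold Cl, c0.
  destruct (Z_lt_dec 0 y).
  - rewrite (proj2 (Z.eqb_neq y 0)) by lia. reflexivity.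
  - unfold rowC. destruct (DPd p0 0 (Z.to_nat (- y)) x) as [D|D].
    { exfalso. unfold DP in D. pose proof (Ft_pos p0 (Z.to_nat (-y))). lia. }
    destruct (Z.eq_dec y 0) as [->|Hy].
    + simpl (Z.to_nat (-0)). destruct (HPd p0 0 0 x) as [H|H]; unfold HP, aa, BB in H; cbn [ff] in H.
      * rewrite (proj2 (Z.leb_le x (-1))) by lia. simpl andb.
        transitivity (Half (if (Z.to_nat (- x) <=? length (binrep p0))%nat
             then nth (length (binrep p0) - Z.to_nat (- x)) (binrep p0) false else false)).
        2:{ destruct (_ <=? _)%nat; reflexivity. }
        f_equal. rewrite binrep_bit by lia. unfold sb. cbn [ff].
        rewrite (split_Z p0). fold (jz p0 0). fold (oz p0 0).
        unfold oz, jz; simpl Nk. rewrite testbit_mulpow by lia. f_equal. lia.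
      * rewrite (proj2 (Z.leb_gt x (-1))) by lia. reflexivity.
    + rewrite (proj2 (Z.eqb_neq y 0)) by lia. simpl andb.
      destruct (HPd p0 0 (Z.to_nat (- y)) x) as [H|H]; auto. exfalso.
      unfold HP, aa, BB in H. destruct (Z.to_nat (- y)) as [|r] eqn:E; [lia|].
      cbn [ff] in H. pose proof (Ft_pos p0 r). lia.
Qed.

Lemma iter_Cl p0 n : Nat.iter n F (c0 (binrep p0)) = Cl p0 (Z.of_nat n).
Proof.
  induction n as [|n IH].
  - simpl. symmetry. apply Cl_init.
  - simpl Nat.iter. rewrite IH. rewrite Cl_step by lia. f_equal. lia.
Qed.

Definition rowF p0 k x : state :=
  if Z_le_dec x (ff p0 k) then Def (sb p0 k x) (cb p0 k x)
  else if Z_le_dec x (aa p0 k) then Half (sb p0 k x) else Und.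

Lemma limit_row p0 L k x : is_limit (binrep p0) L -> L (x, - Z.of_nat k) = rowF p0 k x.
Proof.
  intros HL. destruct (HL (x, - Z.of_nat k)) as [N HN].
  set (T := Z.to_nat (Z.abs (Ft p0 k + ff p0 k - 1 - x) + Ft p0 k + Z.abs (BB p0 k x))).
  rewrite <- (HN (Nat.max N T)) by lia. rewrite iter_Cl.
  unfold Cl. destruct (Z_lt_dec 0 (- Z.of_nat k)); [lia|].
  replace (Z.to_nat (- - Z.of_nat k)) with k by lia.
  pose proof (Ft_pos p0 k).
  assert (HT : Z.abs (Ft p0 k + ff p0 k - 1 - x) + Ft p0 k + Z.abs (BB p0 k x) <= Z.of_nat (Nat.max N T)) by lia.
  unfold rowC, rowF. destruct (DPd p0 _ k x) as [D|D]; unfold DP in D;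
  destruct (Z_le_dec x (ff p0 k)); try lia; auto.
  destruct (HPd p0 _ k x) as [H2|H2]; unfold HP in H2;
  destruct (Z_le_dec x (aa p0 k)); try lia; auto.
Qed.

Definition cnt (z n : nat) : nat :=
  length (filter (fun j => Nat.odd (Nat.iter j collatzT z)) (seq 0 n)).

Lemma cnt_S z n : cnt z (S n) = (cnt z n + if Nat.odd (Nat.iter n collatzT z) then 1 else 0)%nat.
Proof. unfold cnt. rewrite seq_S, filter_app, length_app. simpl.
  destruct (Nat.odd _); simpl; lia. Qed.

Lemma T_even n : collatzT (2 * n) = n.
Proof. unfold collatzT. rewrite Nat.even_mul. change (Nat.even 2) with true. cbn [orb].
  rewrite Nat.div2_div, Nat.mul_comm. apply Nat.div_mul. lia. Qed.

Lemma T_odd n : Nat.odd n = true -> collatzT n = ((3 * n + 1) / 2)%nat.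
Proof. intros H. unfold collatzT. rewrite <- Nat.negb_odd, H. simpl. apply Nat.div2_div. Qed.

Lemma halving z j : forall o n c, Nat.odd o = true -> Nat.iter n collatzT z = (2 ^ j * o)%nat ->
  cnt z n = c -> Nat.iter (n + j) collatzT z = o /\ cnt z (n + j) = c.
Proof.
  induction j as [|j IH]; intros o n c Ho Hi Hc.
  - rewrite Nat.add_0_r. split; auto. rewrite Hi. simpl. lia.
  - replace (n + S j)%nat with (S n + j)%nat by lia. apply IH; auto.
    + simpl Nat.iter at 1. rewrite Hi. rewrite Nat.pow_succ_r', <- Nat.mul_assoc. apply T_even.
    + rewrite cnt_S, Hi, Nat.pow_succ_r', <- Nat.mul_assoc.
      rewrite Nat.odd_mul. simpl. lia.
Qed.

Lemma collatz_main p0 k : exists n,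
  Nat.iter n collatzT (Pos.to_nat p0) = Pos.to_nat (oddp (Nk p0 k)) /\ cnt (Pos.to_nat p0) n = k.
Proof.
  induction k as [|k [n [Hn Hc]]].
  - exists (0 + v2 p0)%nat. apply (halving _ (v2 p0) _ 0 0); auto using oddp_odd_nat.
    simpl. apply split_nat.
  - pose proof (jz_S p0 k) as Hj. unfold jz in Hj.
    set (N' := Nk p0 (S k)) in *.
    assert (E3 : Pos.to_nat N' = (3 * Pos.to_nat (oddp (Nk p0 k)) + 1)%nat).
    { unfold N'. cbn [Nk]. rewrite Pos2Nat.inj_succ, Pos2Nat.inj_mul. simpl. lia. }
    destruct (v2 N') as [|v] eqn:Ev; [lia|].
    pose proof (split_nat N') as Hs. rewrite Ev in Hs.
    destruct (halving (Pos.to_nat p0) v (Pos.to_nat (oddp N')) (S n) (S k)) as [H1 H2].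
    + apply oddp_odd_nat.
    + simpl Nat.iter at 1. rewrite Hn. rewrite T_odd by apply oddp_odd_nat.
      rewrite <- E3, Hs, Nat.pow_succ_r', <- Nat.mul_assoc. rewrite Nat.mul_comm. apply Nat.div_mul. lia.
    + rewrite cnt_S, Hc, Hn, oddp_odd_nat. lia.
    + exists (S n + v)%nat. auto.
Qed.

Lemma rowval_bits L y0 x1 V : 0 <= V -> forall n : nat,
  (forall i : nat, (i < n)%nat -> sumbit (L (x1 - Z.of_nat i, y0)) = Some (Z.testbit V (Z.of_nat i))) ->
  rowval L y0 x1 n = V mod 2 ^ (Z.of_nat n).
Proof.
  intros HV n. induction n as [|n IH]; intros Hb.
  - simpl. rewrite Z.mod_1_r. reflexivity.
  - simpl rowval. rewrite IH by (intros; apply Hb; lia).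
    rewrite Hb by lia. rewrite Nat2Z.inj_succ, <- Z.add_1_r, mod_succ by lia.
    destruct (Z.testbit V (Z.of_nat n)); simpl; ring.
Qed.

Theorem mainTheorem2 (z : nat) (hz : (1 <= z)%nat) (y0 : Z) (hy0 : y0 <= 0)
  (L : config) (hL : is_limit (binrep (Pos.of_nat z)) L) :
  exists x1 : Z,
    (forall x : Z, sumbit (L (x, y0)) <> None <-> x <= x1) /\
    (exists M : Z, forall x : Z, sumbit (L (x, y0)) = Some true -> M <= x) /\
    (exists (M : Z) (m o : nat),
       (forall x : Z, sumbit (L (x, y0)) = Some true -> M <= x) /\
       kth_odd_term z (Z.to_nat (- y0)) o /\
       rowval L y0 x1 (Z.to_nat (x1 - M + 1)) = 2 ^ Z.of_nat m * Z.of_nat o).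
Proof.
  set (p0 := Pos.of_nat z) in *.
  assert (Hz : z = Pos.to_nat p0) by (unfold p0; rewrite Nat2Pos.id; lia).
  set (k := Z.to_nat (- y0)).
  assert (Ey : y0 = - Z.of_nat k) by (unfold k; lia).
  assert (LR : forall x, L (x, y0) = rowF p0 k x) by (intros; rewrite Ey; apply limit_row; auto).
  set (x1 := Z.max (ff p0 k) (aa p0 k)).
  set (M := ff p0 k - 1 - Z.log2 (oz p0 k)).
  assert (HB : forall x : Z, sumbit (L (x, y0)) = Some true -> M <= x).
  { intros x. rewrite LR. unfold rowF, M.
    destruct (Z_le_dec x (ff p0 k)); [|destruct (Z_le_dec x (aa p0 k))]; simpl;
    intros H; try discriminate; injection H; apply sb_true_bound. }
  exists x1. split; [|split].
  - intros x. rewrite LR. unfold rowF, x1.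
    destruct (Z_le_dec x (ff p0 k)); [|destruct (Z_le_dec x (aa p0 k))]; simpl;
    split; intros; try discriminate; try lia. congruence.
  - exists M. exact HB.
  - set (e := x1 - ff p0 k + 1).
    assert (He : 1 <= e) by (unfold e, x1; lia).
    exists M, (Z.to_nat e), (Pos.to_nat (oddp (Nk p0 k))).
    split; [exact HB|split].
    + destruct (collatz_main p0 k) as [n [H1 H2]].
      exists n. rewrite Hz. split; [exact H1|split; [apply oddp_odd_nat|exact H2]].
    + pose proof (oz_pos p0 k) as Hoz.
      rewrite (rowval_bits L y0 x1 (2 ^ e * oz p0 k)).
      * rewrite Z.mod_small.
        -- rewrite positive_nat_Z, Z2Nat.id by lia. reflexivity.
        -- pose proof (Z.log2_spec (oz p0 k) Hoz) as [_ Hl].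
           pose proof (Z.log2_nonneg (oz p0 k)).
           replace (Z.of_nat (Z.to_nat (x1 - M + 1))) with (e + Z.succ (Z.log2 (oz p0 k)))
             by (unfold e, M; lia).
           rewrite Z.pow_add_r by lia.
           pose proof (Z.pow_pos_nonneg 2 e ltac:(lia) ltac:(lia)).
           split; [nia|]. apply Z.mul_lt_mono_pos_l; lia.
      * pose proof (Z.pow_pos_nonneg 2 e ltac:(lia) ltac:(lia)). nia.
      * intros i Hi. rewrite LR. unfold rowF.
        rewrite testbit_mulpow by lia.
        replace (Z.testbit (oz p0 k) (Z.of_nat i - e)) with (sb p0 k (x1 - Z.of_nat i))
          by (unfold sb, e; f_equal; lia).
        destruct (Z_le_dec (x1 - Z.of_nat i) (ff p0 k)); [reflexivity|].
        destruct (Z_le_dec (x1 - Z.of_nat i) (aa p0 k)); [reflexivity|].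
        unfold x1 in *. lia.
Qed.
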